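(* Let $X$ be a real Hilbert space, let $n\in\{3,4,\ldots\}$, let $U_1,\ldots,U_n$ be closed linear subspaces of $X$, $P_i := P_{U_i}$, and $Z := U_1\cap\cdots\cap U_n$. Define $M\colon X^{n-1}\to X^n$ by $M(z_1,\ldots,z_{n-1}) = (x_1,\ldots,x_n)$, where $x_1 = P_1 z_1$, $x_i = P_i(x_{i-1}+z_i-z_{i-1})$ for $2\le i\le n-1$, and $x_n = P_n(x_1+x_{n-1}-z_{n-1})$. Writing $Q_i\colon X^n\to X$ for the $i$-th coordinate map, define $T\colon X^{n-1}\to X^{n-1}$ by \[ T\mathbf z = \mathbf z + \big((Q_2-Q_1)M\mathbf z,\,(Q_3-Q_2)M\mathbf z,\,\ldots,\,(Q_n-Q_{n-1})M\mathbf z\big). \] Let $0<\lambda<1$ and $\mathbf z_0=(z_{0,1},\ldots,z_{0,n-1})\in X^{n-1}$, generate $\mathbf z_{k+1} = (1-\lambda)\mathbf z_k+\lambda T\mathbf z_k$, and set $p := \frac{1}{n-1}(z_{0,1}+\cdots+z_{0,n-1})$. Then there exists $\bar{\mathbf z}\in X^{n-1}$ such that $\mathbf z_k\to\bar{\mathbf z}\in\operatorname{Fix}T$ (in norm) and \[ M\mathbf z_k\to M\bar{\mathbf z} = (P_Zp,\ldots,P_Zp)\in X^n. \] In particular, with $Q_1$ also denoting the first-coordinate map on $X^{n-1}$, $P_1(Q_1\mathbf z_k) = Q_1M\mathbf z_k\to P_Z(p)=\frac{1}{n-1}P_Z(z_{0,1}+\cdots+z_{0,n-1})$. Consequently, if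 $x_0\in X$ and $\mathbf z_0=(x_0,\ldots,x_0)$, then $P_1Q_1\mathbf z_k\to P_Zx_0$.
   Context: $P_S$ denotes the orthogonal projection onto a closed linear subspace $S$; $\operatorname{Fix}T$ is the fixed point set of $T$. The map $M$ is the Malitsky-Tam splitting map specialized to the normal cone operators $A_i=N_{U_i}$, whose resolvents are $P_i$. *)

(* Defs.v *)
From HB Require Import structures.
From mathcomp Require Import all_boot all_order all_algebra.
From mathcomp Require Import all_classical all_reals all_analysis.
Set Implicit Arguments. Unset Strict Implicit. Unset Printing Implicit Defensive.
Import Order.TTheory GRing.Theory Num.Theory.
Import numFieldNormedType.Exports.
Local Open Scope classical_set_scope.
Local Open Scope ring_scope.

(* ip is an inner product on X inducing the norm of X; together with
   completeness of X this makes X a real Hilbert space. *)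
Definition is_inner_product (R : realType) (X : normedModType R)
  (ip : X -> X -> R) : Prop :=
  (forall x y, ip x y = ip y x) /\
  (forall (a : R) (x y z : X), ip (a *: x + y) z = a * ip x z + ip y z) /\
  (forall x, ip x x = `|x| ^+ 2).

Definition closed_subspace (R : realType) (X : normedModType R) (U : set X) :=
  closed U /\ U 0 /\ (forall (a : R) (x y : X), U x -> U y -> U (a *: x + y)).

Definition is_orth_proj (R : realType) (X : normedModType R)
  (ip : X -> X -> R) (U : set X) (P : X -> X) : Prop :=
  forall x, U (P x) /\ (forall u, U u -> ip (x - P x) u = 0).

(* Vectors of X^{n-1} and X^n are represented by z : nat -> X, using only
   the coordinates 1..n-1 (resp. 1..n); P i is the projection P_i. *)

Fixpoint MT_x (R : realType) (X : normedModType R) (P : nat -> X -> X)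
  (z : nat -> X) (i : nat) : X :=
  match i with
  | 0 => 0
  | 1 => P 1%N (z 1%N)
  | (j.+1 as i') => P i' (MT_x P z j + z i' - z j)
  end.

Definition MT_M (R : realType) (X : normedModType R) (n : nat)
  (P : nat -> X -> X) (z : nat -> X) : nat -> X :=
  fun i => if i == n then P n (MT_x P z 1 + MT_x P z n.-1 - z n.-1)
           else MT_x P z i.

Definition MT_T (R : realType) (X : normedModType R) (n : nat)
  (P : nat -> X -> X) (z : nat -> X) : nat -> X :=
  fun i => z i + (MT_M n P z i.+1 - MT_M n P z i).

(* Main.v *)
Require Import Defs.
From HB Require Import structures.
From mathcomp Require Import all_boot all_order all_algebra.
From mathcomp Require Import all_classical all_reals all_analysis.
From mathcomp Require Import lra ring zify.
Import Order.TTheory GRing.Theory Num.Theory.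
Import numFieldNormedType.Exports.
Local Open Scope classical_set_scope.
Local Open Scope ring_scope.
Lemma small_inv (R : realType) (e : R) : 0 < e ->
  exists K : nat, forall k, (K <= k)%N -> (k.+1%:R)^-1 < e.
Proof.
move=> e0; exists (Num.truncn e^-1) => k Kk.
rewrite invf_plt ?posrE ?ltr0Sn //.
apply: (lt_le_trans (truncnS_gt _)); by rewrite ler_nat ltnS.
Qed.

Lemma sq_small_eq0 (R : realType) (x : R) : (forall e, 0 < e -> x ^+ 2 <= e) -> x = 0.
Proof.
move=> H; apply/eqP; apply: contraT => nz.
have hp : 0 < x ^+ 2 by rewrite exprn_even_gt0 //.
have := H (x ^+ 2 / 2) (divr_gt0 hp (ltr0Sn _ 1)); lra.
Qed.

Section Abstract.
Variables (R : realType) (V : lmodType R) (dot : V -> V -> R).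
Hypothesis dotC : forall x y, dot x y = dot y x.
Hypothesis dotL : forall a x y z, dot (a *: x + y) z = a * dot x z + dot y z.
Hypothesis dot_ge0 : forall x, 0 <= dot x x.
Local Notation N x := (dot x x).

Lemma dot0l z : dot 0 z = 0.
Proof. have := dotL 1 0 0 z; rewrite scaler0 addr0 mul1r; lra. Qed.
Lemma dotDl x y z : dot (x + y) z = dot x z + dot y z.
Proof. by rewrite -{1}(scale1r x) dotL mul1r. Qed.
Lemma dotZl a x z : dot (a *: x) z = a * dot x z.
Proof. by rewrite -(addr0 (a *: x)) dotL dot0l addr0. Qed.
Lemma dotNl x z : dot (- x) z = - dot x z.
Proof. by rewrite -scaleN1r dotZl mulN1r. Qed.
Lemma dotBl x y z : dot (x - y) z = dot x z - dot y z.
Proof. by rewrite dotDl dotNl. Qed.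
Lemma dotDr x y z : dot z (x + y) = dot z x + dot z y.
Proof. by rewrite dotC dotDl !(dotC z). Qed.
Lemma dotZr a x z : dot z (a *: x) = a * dot z x.
Proof. by rewrite dotC dotZl dotC. Qed.
Lemma dotNr x z : dot z (- x) = - dot z x.
Proof. by rewrite dotC dotNl dotC. Qed.
Lemma dotBr x y z : dot z (x - y) = dot z x - dot z y.
Proof. by rewrite dotDr dotNr. Qed.
Lemma dot0r z : dot z 0 = 0.
Proof. by rewrite dotC dot0l. Qed.

Lemma ND x y : N (x + y) = N x + 2 * dot x y + N y.
Proof. rewrite !dotDl !dotDr (dotC y x); lra. Qed.
Lemma NB x y : N (x - y) = N x - 2 * dot x y + N y.
Proof. rewrite !dotBl !dotBr (dotC y x); lra. Qed.
Lemma NZ a x : N (a *: x) = a ^+ 2 * N x.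
Proof. rewrite dotZl dotZr; ring. Qed.
Lemma NN x : N (- x) = N x.
Proof. by rewrite dotNl dotNr opprK. Qed.
Lemma NBC x y : N (x - y) = N (y - x).
Proof. by rewrite -NN opprB. Qed.
Lemma ND_le x y : N (x + y) <= 2 * N x + 2 * N y.
Proof. have := dot_ge0 (x - y); rewrite NB ND; lra. Qed.

Lemma CS x y : dot x y ^+ 2 <= N x * N y.
Proof.
have H t : 0 <= N x - 2 * t * dot x y + t ^+ 2 * N y.
  by have := dot_ge0 (x - t *: y); rewrite NB NZ dotZr mulrA.
have hx := dot_ge0 x; have hy := dot_ge0 y.
have [d0|dn0] := eqVneq (dot x y) 0.
  by rewrite d0 expr0n /= mulr_ge0.
have [y0|yn0] := eqVneq (N y) 0.
  have := H ((N x + 1) / (2 * dot x y)); rewrite y0 mulr0 addr0.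
  have e2 : 2 * ((N x + 1) / (2 * dot x y)) * dot x y = N x + 1.
    by field; rewrite dn0.
  rewrite e2; lra.
have ypos : 0 < N y by rewrite lt_neqAle eq_sym yn0 hy.
have := H (dot x y / N y).
set d := dot x y; set b := N y => h1.
have e1 : N x - 2 * (d / b) * d + (d / b) ^+ 2 * b = N x - d ^+ 2 / b.
  by field; rewrite /b.
rewrite e1 in h1.
have : d ^+ 2 / b <= N x by lra.
by rewrite ler_pdivrMr.
Qed.

Lemma dot_null x y : N x = 0 -> dot x y = 0.
Proof.
move=> h; have := CS x y; rewrite h mul0r => h2.
by apply/eqP; rewrite -sqrf_eq0 eq_le h2 sqr_ge0.
Qed.

Lemma null_add x y : N x = 0 -> N y = 0 -> N (x + y) = 0.
Proof. move=> hx hy; rewrite ND hx hy dot_null //; lra. Qed.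

Hypothesis complete : forall v : nat -> V,
  (forall e, 0 < e -> exists K, forall j m, (K <= j)%N -> (K <= m)%N -> N (v j - v m) < e) ->
  exists g, forall e, 0 < e -> exists K, forall k, (K <= k)%N -> N (v k - g) < e.

Variable S : V -> V.
Hypothesis S_lin : forall a x y, S (a *: x + y) = a *: S x + S y.
Variable c : R.
Hypothesis c_gt0 : 0 < c.
Hypothesis S_avg : forall x, N (S x) + c * N (x - S x) <= N x.

Lemma S0 : S 0 = 0.
Proof. have := S_lin 1 0 0; rewrite scaler0 !addr0 scale1r => /eqP.
by rewrite -subr_eq0 opprD addrA subrr add0r oppr_eq0 => /eqP. Qed.
Lemma SD x y : S (x + y) = S x + S y.
Proof. by have := S_lin 1 x y; rewrite !scale1r. Qed.
Lemma SZ a x : S (a *: x) = a *: S x.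
Proof. by have := S_lin a x 0; rewrite !addr0 S0 addr0. Qed.
Lemma SN x : S (- x) = - S x.
Proof. by rewrite -scaleN1r SZ scaleN1r. Qed.
Lemma SB x y : S (x - y) = S x - S y.
Proof. by rewrite SD SN. Qed.
Lemma S_ne x : N (S x) <= N x.
Proof. have := S_avg x; have := mulr_ge0 (ltW c_gt0) (dot_ge0 (x - S x)); lra. Qed.

Local Notation Sk k x := (iter k S x).

Lemma SkD k x y : Sk k (x + y) = Sk k x + Sk k y.
Proof. by elim: k => //= k ->; rewrite SD. Qed.
Lemma SkB k x y : Sk k (x - y) = Sk k x - Sk k y.
Proof. by elim: k => //= k ->; rewrite SB. Qed.
Lemma SkZ k a x : Sk k (a *: x) = a *: Sk k x.
Proof. by elim: k => //= k ->; rewrite SZ. Qed.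
Lemma Sk_ne k x : N (Sk k x) <= N x.
Proof. elim: k => //= k ih; exact: le_trans (S_ne _) ih. Qed.

Lemma res_decay y k : c * k.+1%:R * N (Sk k (y - S y)) + N (Sk k.+1 y) <= N y.
Proof.
have ak k' : Sk k' (y - S y) = Sk k' y - Sk k'.+1 y by rewrite SkB iterSr.
elim: k => [|k ih].
  by rewrite /= mulr1 addrC S_avg.
have h1 := S_avg (Sk k.+1 y).
have h2 : N (Sk k.+1 (y - S y)) <= N (Sk k (y - S y)) by rewrite iterS S_ne.
have e : Sk k.+1 (y - S y) = Sk k.+1 y - S (Sk k.+1 y) by rewrite ak.
rewrite -e in h1.
have cp : 0 <= c * k.+1%:R by rewrite mulr_ge0 // ltW.
have h2' : 0 <= N (Sk k (y - S y)) - N (Sk k.+1 (y - S y)) by rewrite subr_ge0.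
have h3 := mulr_ge0 cp h2'.
rewrite -[(k.+2)%:R]natr1 mulrDr mulr1.
rewrite mulrBr in h3.
lra.
Qed.
Lemma lin2 {s a b e : R} : s <= 2 * a + 2 * b -> a < e / 4 -> b < e / 4 -> s < e.
Proof. lra. Qed.

Lemma lin3 {nr d e T nu : R} : nr < d + e -> d <= nr - 2 * (T * (nu + 1)) + T * nu ->
  T * (nu + 2) < e.
Proof. lra. Qed.

Lemma lin5 {x A B A' B' e : R} : x <= 2 * A + 2 * B -> A <= A' -> B <= B' ->
  A' <= e / 4 -> B' <= e / 4 -> x <= e.
Proof. lra. Qed.

Lemma lin6 {a b b' e : R} : a < e / 8 -> b <= b' -> b' < e / 8 -> 2 * a + 2 * b < e / 2.
Proof. lra. Qed.

Lemma lin_cauchy {s a b cc d e1 e2 : R} :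
  s + 2 * 2 * cc = 2 * a + 2 * b -> a < d + e1 -> b < d + e2 -> d <= cc ->
  s <= 2 * e1 + 2 * e2.
Proof. lra. Qed.

Lemma res_cvg y e : 0 < e -> exists K, forall k, (K <= k)%N -> N (Sk k (y - S y)) < e.
Proof.
move=> e0.
have ny := dot_ge0 y.
have e'0 : 0 < e * c / (N y + 1) by rewrite divr_gt0 ?mulr_gt0 //; lra.
have [K HK] := @small_inv _ _ e'0; exists K => k /HK hk.
have hd := res_decay y k.
have hm : 0 < k.+1%:R :> R by rewrite ltr0Sn.
set m := k.+1%:R in hk hd hm.
set a := N (Sk k (y - S y)) in hd *.
have ha : 0 <= a by exact: dot_ge0.
have hb := dot_ge0 (Sk k.+1 y).
rewrite -div1r ltr_pdivrMr // in hk.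
have hk2 : N y + 1 < e * c * m.
  have hp : 0 < N y + 1 by lra.
  by rewrite mulrAC ltr_pdivlMr // mul1r in hk.
rewrite ltNge; apply/negP => hea.
have : c * m * e <= c * m * a by rewrite ler_pM2l ?mulr_gt0.
lra.
Qed.

Lemma null_addl x y : N x = 0 -> N (x + y) = N y.
Proof. by move=> hx; rewrite ND hx dot_null //; lra. Qed.

Lemma Sk_null k x : N x = 0 -> N (Sk k x) = 0.
Proof. move=> hx; apply/eqP; rewrite eq_le dot_ge0 andbT -hx; exact: Sk_ne. Qed.

Theorem abstract_main (u : nat -> V) : (forall k, N (u k.+1 - S (u k)) = 0) ->
  exists h, N (h - S h) = 0 /\
    forall e, 0 < e -> exists K, forall k, (K <= k)%N -> N (u k - h) < e.
Proof.
move=> hu; set z := u 0%N.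
pose E := [set r | exists y, r = N (z - (y - S y))].
have hE : has_inf E.
  split; first by exists (N (z - (0 - S 0))); exists 0.
  by exists 0 => r [y ->]; exact: dot_ge0.
set d := inf E.
have Elb y : d <= N (z - (y - S y)) by apply: (ge_inf hE.2); exists y.
have : forall j : nat, exists y, N (z - (y - S y)) < d + (j.+1%:R)^-1.
  move=> j; have jp : 0 < (j.+1%:R : R)^-1 by rewrite invr_gt0 ltr0Sn.
  have [r [y ->] hr] := inf_adherent jp hE.
  by exists y.
move=> /choice [y hy].
pose v j := y j - S (y j).
have hyv j : N (z - v j) < d + (j.+1%:R)^-1 by exact: hy j.
have vmid j m : exists w, (z - v j) + (z - v m) = 2 *: (z - (w - S w)).
  exists (2^-1 *: (y j + y m)).
  rewrite SZ -scalerBr [2 *: _]scalerBr scalerA mulfV ?pnatr_eq0 // scale1r.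
  rewrite -[2]/(2%:R) scaler_nat mulr2n /v.
  rewrite addrACA -opprD; congr (_ - _).
  by rewrite SD opprD addrACA.
have cauchy_v j m : N (v j - v m) <= 2 * (j.+1%:R)^-1 + 2 * (m.+1%:R)^-1.
  have par : N ((z - v m) - (z - v j)) + N ((z - v j) + (z - v m))
      = 2 * N (z - v j) + 2 * N (z - v m).
    rewrite (NB (z - v m) (z - v j)) (ND (z - v j) (z - v m)) (dotC (z - v m)); lra.
  have e1 : (z - v m) - (z - v j) = v j - v m.
    by rewrite (opprB z (v j)) (addrC (z - v m)) addrA subrK.
  have [w hw] := vmid j m.
  rewrite e1 hw NZ in par.
  rewrite expr2 in par.
  exact: (lin_cauchy par (hyv j) (hyv m) (Elb w)).
have [g hg] : exists g, forall e, 0 < e -> exists K, forall k, (K <= k)%N -> N (v k - g) < e.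
  apply: complete => e e0.
  have e4 : 0 < e / 4 by rewrite divr_gt0.
  have [K HK] := @small_inv _ _ e4; exists K => j m Kj Km.
  exact: (lin2 (cauchy_v j m) (HK _ Kj) (HK _ Km)).
set h := z - g.
have orth w : dot h (w - S w) = 0.
  set uu := w - S w.
  set s := N uu + 1.
  have s0 : 0 < s by rewrite /s; have := dot_ge0 uu; lra.
  have Dj j : (dot (z - v j) uu) ^+ 2 <= (j.+1%:R)^-1 * s ^+ 2.
    set D := dot (z - v j) uu.
    set t := D / s.
    have Dt : D = t * s by rewrite /t mulrVK // unitfE gt_eqF.
    have e1 : z - v j - t *: uu = z - ((y j + t *: w) - S (y j + t *: w)).
      have -> : (y j + t *: w) - S (y j + t *: w) = v j + t *: uu.
        by rewrite SD SZ (opprD (S (y j))) addrACA -scalerBr.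
      by rewrite (opprD (v j)) addrA.
    have := Elb (y j + t *: w); rewrite -e1 NB NZ dotZr -/D.
    have := hyv j.
    rewrite Dt /s => h1 h2.
    have ht := sqr_ge0 t.
    have hu2 := dot_ge0 uu.
    rewrite [t * (t * _)]mulrA -expr2 in h2.
    have h3 := lin3 h1 h2.
    have h4 : t ^+ 2 <= (j.+1%:R)^-1.
      have h5 : t ^+ 2 <= t ^+ 2 * (N uu + 2).
        by rewrite ler_peMr //; lra.
      exact: (le_trans h5 (ltW h3)).
    rewrite exprMn; apply: ler_pM => //; first exact: sqr_ge0.
  apply: sq_small_eq0 => e e0.
  have e4 : 0 < e / 4 / s ^+ 2 by rewrite !divr_gt0 // exprn_gt0.
  have [K1 HK1] := @small_inv _ _ e4.
  have [K2 HK2] := hg _ e4.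
  pose j := maxn K1 K2.
  have hj1 := HK1 j (leq_maxl _ _); have hj2 := HK2 j (leq_maxr _ _).
  have dec : dot h uu = dot (z - v j) uu + dot (v j - g) uu.
    by rewrite -dotDl /h addrA subrK.
  have hcs := CS (v j - g) uu.
  have hD := Dj j.
  have hsq : (dot h uu) ^+ 2 <= 2 * (dot (z - v j) uu) ^+ 2 + 2 * (dot (v j - g) uu) ^+ 2.
    rewrite dec; set a1 := dot (z - v j) uu; set a2 := dot (v j - g) uu.
    have := sqr_ge0 (a1 - a2); nra.
  have s2 : 0 < s ^+ 2 by rewrite exprn_gt0.
  have b1 : (j.+1%:R)^-1 * s ^+ 2 <= e / 4.
    by rewrite -ler_pdivlMr //; apply: ltW.
  have b2 : N (v j - g) * N uu <= e / 4.
    have : N (v j - g) * N uu <= N (v j - g) * s ^+ 2.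
      apply: ler_wpM2l; first exact: dot_ge0.
      rewrite /s; have := dot_ge0 uu; nra.
    have : N (v j - g) * s ^+ 2 <= e / 4 by rewrite -ler_pdivlMr //; apply: ltW.
    lra.
  exact: (lin5 hsq hD hcs b1 b2).
have hfix : N (h - S h) = 0.
  have o := orth h.
  have : N (h - S h) = N (S h) - N h.
    rewrite NB; rewrite dotBr in o; lra.
  have := S_ne h; have := dot_ge0 (h - S h); lra.
exists h; split => // e e0.
have e4 : 0 < e / 4 by rewrite divr_gt0.
have e8 : 0 < e / 8 by rewrite divr_gt0.
have [K0 HK0] := hg _ e8.
have [K HK] := res_cvg (y K0) _ e8.
exists K => k Kk.
have hSg : N (Sk k g) < e / 2.
  have eg : Sk k g = Sk k (v K0) - Sk k (v K0 - g) by rewrite -SkB subKr.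
  rewrite eg; apply: (le_lt_trans (ND_le _ _)); rewrite NN.
  exact: (lin6 (HK _ Kk) (Sk_ne k (v K0 - g)) (HK0 _ (leqnn _))).
have hz : N (u k - Sk k z) = 0.
  elim: k {Kk hSg} => [|k ih]; first by rewrite subrr dot0l.
  have -> : u k.+1 - Sk k.+1 z = (u k.+1 - S (u k)) + S (u k - Sk k z).
    by rewrite SB addrA subrK.
  by apply: null_add; [apply: hu | rewrite -[S _]/(Sk 1 _); apply: Sk_null].
have hh : N (Sk k h - h) = 0.
  elim: k {Kk hSg hz} => [|k ih]; first by rewrite subrr dot0l.
  have -> : Sk k.+1 h - h = S (Sk k h - h) + (S h - h).
    by rewrite SB /= addrA subrK.
  apply: null_add; first by rewrite -[S _]/(Sk 1 _); apply: Sk_null.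
  by rewrite NBC.
have -> : u k - h = (u k - Sk k z) + ((Sk k h - h) + Sk k g).
  have -> : Sk k z = Sk k h + Sk k g by rewrite -SkD /h subrK.
  by rewrite (addrC (Sk k h - h)) (opprD (Sk k h)) !addrA !subrK.
rewrite null_addl // null_addl //; lra.
Qed.

End Abstract.

Lemma fin_eventually (P : nat -> nat -> Prop) m :
  (forall i, (i < m)%N -> exists K, forall k, (K <= k)%N -> P i k) ->
  exists K, forall k, (K <= k)%N -> forall i, (i < m)%N -> P i k.
Proof.
elim: m => [|m ih] H; first by exists 0%N => k _ i.
have [K1 H1] := ih (fun i hi => H i (ltnW hi)).
have [K2 H2] := H m (ltnSn m).
exists (maxn K1 K2) => k hk i; rewrite ltnS leq_eqVlt => /orP [/eqP ->|hi].
  by apply: H2; apply: leq_trans hk; exact: leq_maxr.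
by apply: H1 => //; apply: leq_trans hk; exact: leq_maxl.
Qed.

Section XLemmas.
Variables (R : realType) (X : normedModType R) (ip : X -> X -> R).
Hypothesis ipC : forall x y, ip x y = ip y x.
Hypothesis ipL : forall a x y z, ip (a *: x + y) z = a * ip x z + ip y z.
Hypothesis ipN : forall x, ip x x = `|x| ^+ 2.

Lemma ip_ge0 x : 0 <= ip x x.
Proof. by rewrite ipN sqr_ge0. Qed.

Let iDl := @dotDl R X ip ipL.
Let iBl := @dotBl R X ip ipL.
Let iZl := @dotZl R X ip ipL.
Let iNl := @dotNl R X ip ipL.
Let iDr := @dotDr R X ip ipC ipL.
Let iBr := @dotBr R X ip ipC ipL.
Let iZr := @dotZr R X ip ipC ipL.
Let iNr := @dotNr R X ip ipC ipL.

Lemma ip_eq0 x : ip x x = 0 -> x = 0.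
Proof. by rewrite ipN => /eqP; rewrite sqrf_eq0 normr_eq0 => /eqP. Qed.

Definition subsp (U : set X) := forall a x y, U x -> U y -> U (a *: x + y).

Lemma proj_lin U P : subsp U -> is_orth_proj ip U P ->
  forall a x y, P (a *: x + y) = a *: P x + P y.
Proof.
move=> sU hP a x y.
set d := P (a *: x + y) - (a *: P x + P y).
have Ud : U d.
  have := sU (-1) (a *: P x + P y) (P (a *: x + y)).
  rewrite scaleN1r (addrC (- _)); apply; [apply: sU; exact: (hP _).1 | exact: (hP _).1].
have hx u : U u -> ip (P x) u = ip x u.
  by move=> Uu; have := (hP x).2 u Uu; rewrite iBl => /eqP; rewrite subr_eq0 eq_sym => /eqP.
have hy u : U u -> ip (P y) u = ip y u.
  by move=> Uu; have := (hP y).2 u Uu; rewrite iBl => /eqP; rewrite subr_eq0 eq_sym => /eqP.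
have hxy u : U u -> ip (P (a *: x + y)) u = ip (a *: x + y) u.
  by move=> Uu; have := (hP (a *: x + y)).2 u Uu; rewrite iBl => /eqP; rewrite subr_eq0 eq_sym => /eqP.
have o : ip d d = 0.
  by rewrite {1}/d iBl ipL hx // hy // hxy // ipL subrr.
by apply/eqP; rewrite -subr_eq0; apply/eqP; apply: ip_eq0.
Qed.

Lemma proj_norm U P : is_orth_proj ip U P -> forall x, `|P x| <= `|x|.
Proof.
move=> hP x.
have o : ip (x - P x) (P x) = 0 by apply: (hP x).2; exact: (hP x).1.
have e : ip x x = ip (x - P x) (x - P x) + ip (P x) (P x).
  rewrite -{1 2}(subrK (P x) x) (@ND R X ip ipC ipL) o; lra.
have : `|P x| ^+ 2 <= `|x| ^+ 2.
  by rewrite -!ipN e lerDr ip_ge0.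
by move=> h; rewrite -ler_sqr ?nnegrE.
Qed.

Lemma proj_fix U P : subsp U -> is_orth_proj ip U P -> forall x, U x -> P x = x.
Proof.
move=> sU hP x Ux.
have Ud : U (P x - x).
  by have := sU (-1) x (P x) Ux (hP x).1; rewrite scaleN1r addrC.
have := (hP x).2 _ Ud; rewrite -opprB iNl => /eqP; rewrite oppr_eq0 => /eqP /ip_eq0.
by move/eqP; rewrite subr_eq0 => /eqP.
Qed.

Lemma proj_zero U P : is_orth_proj ip U P -> forall w, (forall u, U u -> ip w u = 0) -> P w = 0.
Proof.
move=> hP w hw.
have o : ip (w - P w) (P w) = 0 by apply: (hP w).2; exact: (hP w).1.
rewrite iBl hw in o; last exact: (hP w).1.
by apply: ip_eq0; lra.
Qed.

Lemma proj_cvg U P : subsp U -> is_orth_proj ip U P ->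
  forall (f : nat -> X) l, f @ \oo --> l -> (fun k => P (f k)) @ \oo --> P l.
Proof.
move=> sU hP f l /cvgrPdist_lt hf; apply/cvgrPdist_lt => e e0.
apply: filterS (hf e e0) => k hk.
have -> : P l - P (f k) = P (l - f k).
  by rewrite addrC -scaleN1r -(@proj_lin _ _ sU hP) scaleN1r addrC.
exact: le_lt_trans (@proj_norm _ _ hP _) hk.
Qed.

End XLemmas.
Arguments subsp {R X}.

Section ModAlg.
Variables (R : realType) (V : lmodType R).
Lemma comb3 (a : R) (p q r p' q' r' : V) :
  (a *: p + p') + (a *: q + q') - (a *: r + r') = a *: (p + q - r) + (p' + q' - r').
Proof.
rewrite scalerBr scalerDr opprD (addrACA (a *: p) p' (a *: q) q').
by rewrite (addrACA (a *: p + a *: q)).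
Qed.
Lemma combT (a : R) (p q r p' q' r' : V) :
  (a *: p + p') + ((a *: q + q') - (a *: r + r')) = a *: (p + (q - r)) + (p' + (q' - r')).
Proof.
rewrite scalerDr scalerBr opprD (addrACA (a *: q) q').
by rewrite (addrACA (a *: p)).
Qed.
Lemma comb2 (c1 c2 a : R) (p q p' q' : V) :
  c1 *: (a *: p + p') + c2 *: (a *: q + q') = a *: (c1 *: p + c2 *: q) + (c1 *: p' + c2 *: q').
Proof.
rewrite !scalerDr (addrACA (c1 *: (a *: p))) !scalerA.
by rewrite (mulrC c1) (mulrC c2).
Qed.
Lemma comb_fix (l : R) (h t : V) : h - ((1 - l) *: h + l *: t) = l *: (h - t).
Proof.
by rewrite scalerBl scale1r (opprD (h - l *: h)) addrA (opprB h) subrKC scalerBr.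
Qed.
Lemma comb_avg (l : R) (z t : V) : (1 - l) *: z + l *: t = z + l *: (t - z).
Proof.
by rewrite scalerBl scale1r scalerBr addrAC addrA.
Qed.
End ModAlg.

Lemma avg_alg (R : realType) (l A B C : R) : l != 0 ->
  (1 - l) * ((1 - l) * A) + (1 - l) * (l * B) +
  (l * ((1 - l) * B) + l * (l * C)) +
  (1 - l) / l * (l * (l * (A - B) - l * (B - C))) =
  (1 - l) * A + l * C.
Proof. by move=> h; field. Qed.

Section IPAlg.
Variables (R : realType) (X : lmodType R) (ip : X -> X -> R).
Hypothesis ipC : forall x y, ip x y = ip y x.
Hypothesis ipL : forall a x y z, ip (a *: x + y) z = a * ip x z + ip y z.
Let iDl := @dotDl R X ip ipL.
Let iBl := @dotBl R X ip ipL.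
Let iZl := @dotZl R X ip ipL.
Let iNl := @dotNl R X ip ipL.
Let iDr := @dotDr R X ip ipC ipL.
Let iBr := @dotBr R X ip ipC ipL.
Let iZr := @dotZr R X ip ipC ipL.
Let iNr := @dotNr R X ip ipC ipL.

Lemma stepA (a b c zz : X) : ip (c + zz - a - b) b = 0 ->
  ip (a + (b - c)) (a + (b - c)) - ip a a = (2 * ip zz b - ip b b) - (2 * ip a c - ip c c).
Proof.
rewrite !(iDl, iBl, iDr, iBr, iNl, iNr) => h.
have := ipC a b; have := ipC a c; have := ipC b c; lra.
Qed.

Lemma stepB (a b c x1 : X) : ip (x1 + c - a - b) b = 0 ->
  ip (a + (b - c)) (a + (b - c)) - ip a a = 2 * ip x1 b - ip b b - (2 * ip a c - ip c c).
Proof.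
rewrite !(iDl, iBl, iDr, iBr, iNl, iNr) => h.
have := ipC a b; have := ipC a c; have := ipC b c; lra.
Qed.

Lemma step1 (z1 x1 : X) : ip (z1 - x1) x1 = 0 -> 2 * ip z1 x1 - ip x1 x1 = ip x1 x1.
Proof. rewrite iBl => h; lra. Qed.

Lemma avg_coord (l : R) (a b : X) : 0 < l ->
  ip ((1 - l) *: a + l *: b) ((1 - l) *: a + l *: b)
  + ((1 - l) / l) * ip (a - ((1 - l) *: a + l *: b)) (a - ((1 - l) *: a + l *: b))
  = (1 - l) * ip a a + l * ip b b.
Proof.
move=> l0; rewrite comb_fix.
rewrite !(iDl, iBl, iDr, iBr, iZl, iZr, iNl, iNr).
rewrite (ipC b a).
apply: avg_alg; by rewrite gt_eqF.
Qed.
End IPAlg.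

Section MT.
Variables (R : realType) (X : completeNormedModType R) (ip : X -> X -> R).
Hypothesis ipC : forall x y, ip x y = ip y x.
Hypothesis ipL : forall a x y z, ip (a *: x + y) z = a * ip x z + ip y z.
Hypothesis ipN : forall x, ip x x = `|x| ^+ 2.
Variables (n : nat) (U : nat -> set X) (P : nat -> X -> X).
Hypothesis n3 : (3 <= n)%N.
Hypothesis hU : forall i, (1 <= i <= n)%N -> subsp (U i).
Hypothesis hP : forall i, (1 <= i <= n)%N -> is_orth_proj ip (U i) (P i).

Lemma MT_x1 z : MT_x P z 1 = P 1%N (z 1%N).
Proof. by []. Qed.
Lemma MT_xSS z j : MT_x P z j.+2 = P j.+2 (MT_x P z j.+1 + z j.+2 - z j.+1).
Proof. by []. Qed.
Lemma M_x z i : i != n -> MT_M n P z i = MT_x P z i.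
Proof. by move=> h; rewrite /MT_M (negbTE h). Qed.
Lemma M_n z : MT_M n P z n = P n (MT_x P z 1 + MT_x P z n.-1 - z n.-1).
Proof. by rewrite /MT_M eqxx. Qed.

Let Plin i : (1 <= i <= n)%N -> forall a x y, P i (a *: x + y) = a *: P i x + P i y.
Proof. by move=> hi; apply: (@proj_lin R X ip ipL ipN); [apply: hU | apply: hP]. Qed.

Lemma x_lin a z w i : (i < n)%N -> MT_x P (a *: z + w) i = a *: MT_x P z i + MT_x P w i.
Proof.
elim: i => [|i ih] hi; first by rewrite /= scaler0 addr0.
case: i ih hi => [|i] ih hi.
  by rewrite !MT_x1 Plin //; lia.
rewrite !MT_xSS ih; last by lia.
by rewrite comb3 Plin //; lia.
Qed.

Lemma M_lin a z w i : (1 <= i <= n)%N ->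
  MT_M n P (a *: z + w) i = a *: MT_M n P z i + MT_M n P w i.
Proof.
move=> hi; have [->|ne] := eqVneq i n.
  rewrite !M_n !x_lin; try lia.
  by rewrite comb3 Plin //; lia.
rewrite !M_x // x_lin //; lia.
Qed.

Lemma T_lin a z w i : (1 <= i <= n.-1)%N ->
  MT_T n P (a *: z + w) i = a *: MT_T n P z i + MT_T n P w i.
Proof.
move=> hi; rewrite /MT_T !M_lin; try lia.
exact: combT.
Qed.

Lemma Pin i x : (1 <= i <= n)%N -> U i (P i x).
Proof. by move=> h; exact: (hP _ h x).1. Qed.

Lemma M_in z i : (1 <= i <= n)%N -> U i (MT_M n P z i).
Proof.
move=> hi; have [->|ne] := eqVneq i n.
  by rewrite M_n; apply: Pin; lia.
rewrite M_x //.
case: i hi ne => [|[|j]] hi ne; first by lia.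
  by rewrite MT_x1; apply: Pin; lia.
by rewrite MT_xSS; apply: Pin; lia.
Qed.

Lemma orth1 z : ip (z 1%N - MT_M n P z 1) (MT_M n P z 1) = 0.
Proof.
have h1 : (1 <= 1 <= n)%N by lia.
rewrite M_x; last by lia.
rewrite MT_x1; apply: (hP _ h1 _).2; apply: Pin; lia.
Qed.

Lemma orthi z j : (j.+2 < n)%N ->
  ip (MT_M n P z j.+1 + z j.+2 - z j.+1 - MT_M n P z j.+2) (MT_M n P z j.+2) = 0.
Proof.
move=> hj; have h1 : (1 <= j.+2 <= n)%N by lia.
rewrite !M_x; try lia.
rewrite MT_xSS; apply: (hP _ h1 _).2; apply: Pin; lia.
Qed.

Lemma orthn z : ip (MT_M n P z 1 + MT_M n P z n.-1 - z n.-1 - MT_M n P z n) (MT_M n P z n) = 0.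
Proof.
have h1 : (1 <= n <= n)%N by lia.
rewrite (M_x _ 1%N); last by lia.
rewrite (M_x _ n.-1); last by lia.
rewrite M_n; apply: (hP _ h1 _).2; apply: Pin; lia.
Qed.

Definition phi z i := 2 * ip (z i) (MT_M n P z i) - ip (MT_M n P z i) (MT_M n P z i).

Lemma T_sum z : \sum_(1 <= i < n) ip (MT_T n P z i) (MT_T n P z i)
  = \sum_(1 <= i < n) ip (z i) (z i)
    - ip (MT_M n P z 1 - MT_M n P z n) (MT_M n P z 1 - MT_M n P z n).
Proof.
set D := ip _ _.
suff E : \sum_(1 <= i < n) (ip (MT_T n P z i) (MT_T n P z i) - ip (z i) (z i)) = - D.
  by rewrite -E sumrB subrKC.
have hn : n = n.-1.+1 by lia.
have split : forall F : nat -> R, \sum_(1 <= i < n) F i = \sum_(1 <= i < n.-1) F i + F n.-1.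
  by move=> F; rewrite {1}hn big_nat_recr //=; lia.
rewrite split.
have A : \sum_(1 <= i < n.-1) (ip (MT_T n P z i) (MT_T n P z i) - ip (z i) (z i))
    = \sum_(1 <= i < n.-1) (phi z i.+1 - phi z i).
  apply: eq_big_nat => i hi.
  case: i hi => [|j] hi; first by lia.
  rewrite /MT_T /phi; apply: stepA => //.
  by apply: orthi; lia.
rewrite A telescope_sumr; last by lia.
have B : ip (MT_T n P z n.-1) (MT_T n P z n.-1) - ip (z n.-1) (z n.-1)
   = 2 * ip (MT_M n P z 1) (MT_M n P z n) - ip (MT_M n P z n) (MT_M n P z n) - phi z n.-1.
  rewrite /MT_T /phi -hn; apply: stepB => //.
  exact: orthn.
rewrite B.
have C : phi z 1 = ip (MT_M n P z 1) (MT_M n P z 1).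
  by apply: step1 => //; exact: orth1.
rewrite C /D (@NB R X ip ipC ipL).
have := ipC (MT_M n P z 1) (MT_M n P z n).
lra.
Qed.

Lemma T_ne z : \sum_(1 <= i < n) ip (MT_T n P z i) (MT_T n P z i)
  <= \sum_(1 <= i < n) ip (z i) (z i).
Proof.
rewrite T_sum lerBlDr lerDl; exact: (@ip_ge0 R X ip ipN).
Qed.

Definition dotV (w w' : nat -> X) : R := \sum_(1 <= i < n) ip (w i) (w' i).

Lemma dotV_C x y : dotV x y = dotV y x.
Proof. by apply: eq_bigr => i _; rewrite ipC. Qed.
Lemma dotV_L a x y z : dotV (a *: x + y) z = a * dotV x z + dotV y z.
Proof. by rewrite /dotV mulr_sumr -big_split; apply: eq_bigr => i _; exact: ipL. Qed.
Lemma dotV_ge0 x : 0 <= dotV x x.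
Proof. by apply: sumr_ge0 => i _; exact: (@ip_ge0 R X ip ipN). Qed.

Lemma dotV_coord w i : (1 <= i < n)%N -> ip (w i) (w i) <= dotV w w.
Proof.
move=> hi; rewrite /dotV (bigD1_seq i) /=; first last.
- exact: iota_uniq.
- by rewrite mem_index_iota.
rewrite lerDl; apply: sumr_ge0 => j _; exact: (@ip_ge0 R X ip ipN).
Qed.

Lemma norm_lt_sq (x : X) e : 0 < e -> ip x x < e ^+ 2 -> `|x| < e.
Proof.
by move=> e0 h; rewrite -ltr_sqr ?nnegrE ?normr_ge0 ?(ltW e0) // -ipN.
Qed.

Lemma dotV_complete (v : nat -> nat -> X) :
  (forall e, 0 < e -> exists K, forall j m, (K <= j)%N -> (K <= m)%N -> dotV (v j - v m) (v j - v m) < e) ->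
  exists g, forall e, 0 < e -> exists K, forall k, (K <= k)%N -> dotV (v k - g) (v k - g) < e.
Proof.
move=> hc.
have cv i : (1 <= i < n)%N -> cvg ((fun k => v k i) @ \oo).
  move=> hi; apply: cauchy_cvg; apply: cauchy_exP => eps eps0.
  have [K HK] := hc _ (exprn_gt0 2 eps0).
  exists (v K i); exists K => // k /= Kk.
  rewrite -ball_normE /=.
  apply: norm_lt_sq => //.
  have h1 := dotV_coord (v K - v k) i hi.
  have e1 : (v K - v k) i = v K i - v k i by [].
  rewrite e1 in h1.
  exact: le_lt_trans h1 (HK _ _ (leqnn _) Kk).
exists (fun i => lim ((fun k => v k i) @ \oo)) => e e0.
set d := e / n%:R.
have d0 : 0 < d by rewrite divr_gt0 // ltr0n; lia.
set eta := Num.min d 1.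
have eta0 : 0 < eta by rewrite lt_min d0 ltr01.
have eta2 : eta ^+ 2 <= d.
  have e1 : eta <= 1 by rewrite /eta ge_min lexx orbT.
  have e2 : eta <= d by rewrite /eta ge_min lexx.
  rewrite expr2 -[d]mulr1; apply: ler_pM => //; exact: ltW.
have : forall i, (i < n)%N -> exists K, forall k, (K <= k)%N ->
    (1 <= i)%N -> ip (v k i - lim ((fun k => v k i) @ \oo)) (v k i - lim ((fun k => v k i) @ \oo)) < d.
  move=> i hi; case: (leqP 1 i) => i1; last by exists 0%N => k _ h; lia.
  have := cv i ltac:(by rewrite i1 hi).
  move=> /cvgrPdist_lt /(_ _ eta0) [K _ HK]; exists K => k Kk _.
  have hk := HK k Kk.
  rewrite ipN -normrN opprB; apply: (lt_le_trans _ eta2).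
  by rewrite ltr_sqr ?nnegrE ?normr_ge0 ?(ltW eta0).
move=> /fin_eventually [K HK]; exists K => k Kk.
have hn : (n.-1).+1 = n by lia.
apply: (@le_lt_trans _ _ (\sum_(1 <= i < n) d)).
  apply: ler_sum_nat => i /andP [i1 i2] /=.
  by apply: ltW; apply: HK.
rewrite sumr_const_nat.
have -> : e = d *+ n by rewrite /d -mulr_natr mulfVK // pnatr_eq0; lia.
rewrite -{2}hn mulrSr subn1 ltrDl //.
Qed.

Definition Sop (lam : R) (z : nat -> X) : nat -> X :=
  fun i => if (1 <= i < n)%N then (1 - lam) *: z i + lam *: MT_T n P z i else 0.

Lemma Sop_lin lam a x y : Sop lam (a *: x + y) = a *: Sop lam x + Sop lam y.
Proof.
apply: funext => i.
have E : forall (f g : nat -> X) (b : R) j, (b *: f + g) j = b *: f j + g j by [].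
rewrite !E /Sop; case: ifP => hi.
  rewrite T_lin; last by lia.
  exact: comb2.
by rewrite scaler0 addr0.
Qed.

Lemma lin7 (l A B : R) : 0 < l -> B <= A -> (1 - l) * A + l * B <= A.
Proof. move=> l0 BA; have := ler_wpM2l (ltW l0) BA; lra. Qed.

Lemma Sop_avg lam : 0 < lam -> forall x,
  dotV (Sop lam x) (Sop lam x) + ((1 - lam) / lam) * dotV (x - Sop lam x) (x - Sop lam x)
  <= dotV x x.
Proof.
move=> l0 x.
rewrite /dotV mulr_sumr -big_split /=.
have e : \sum_(1 <= i < n) (ip (Sop lam x i) (Sop lam x i) +
     (1 - lam) / lam * ip ((x - Sop lam x) i) ((x - Sop lam x) i))
   = \sum_(1 <= i < n) ((1 - lam) * ip (x i) (x i) + lam * ip (MT_T n P x i) (MT_T n P x i)).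
  apply: eq_big_nat => i hi.
  have -> : (x - Sop lam x) i = x i - Sop lam x i by [].
  rewrite /Sop hi.
  exact: avg_coord.
rewrite e big_split /= -!mulr_sumr.
apply: lin7 => //.
exact: T_ne.
Qed.

Variable PZ : X -> X.
Hypothesis hPZ : is_orth_proj ip [set x | forall i, (1 <= i <= n)%N -> U i x] PZ.

Lemma sZ : subsp [set x | forall i, (1 <= i <= n)%N -> U i x].
Proof. move=> a x y hx hy i hi; apply: hU => //; [exact: hx | exact: hy]. Qed.

Let PZlin := @proj_lin R X ip ipL ipN _ _ sZ hPZ.

Lemma PZ0 : PZ 0 = 0.
Proof.
apply: (@proj_zero R X ip ipL ipN _ _ hPZ) => u _.
exact: (@dot0l R X ip ipL).
Qed.
Lemma PZ_add x y : PZ (x + y) = PZ x + PZ y.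
Proof. by have := PZlin 1 x y; rewrite !scale1r. Qed.
Lemma PZ_scale a x : PZ (a *: x) = a *: PZ x.
Proof. by have := PZlin a x 0; rewrite !addr0 PZ0 addr0. Qed.
Lemma PZ_sub x y : PZ (x - y) = PZ x - PZ y.
Proof. by have := PZlin (-1) y x; rewrite !scaleN1r addrC (addrC (- _)). Qed.

Lemma PZ_P i y : (1 <= i <= n)%N -> PZ (P i y) = PZ y.
Proof.
move=> hi.
have h0 : PZ (y - P i y) = 0.
  apply: (@proj_zero R X ip ipL ipN _ _ hPZ) => u Zu.
  by apply: (hP _ hi y).2; exact: Zu.
by rewrite -{2}(subrK (P i y) y) PZ_add h0 add0r.
Qed.

Lemma psi z i : (1 <= i < n)%N -> PZ (MT_x P z i) = PZ (z i).
Proof.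
elim: i => [|i ih] hi; first by lia.
case: i ih hi => [|j] ih hi.
  by rewrite MT_x1 PZ_P //; lia.
rewrite MT_xSS PZ_P; last by lia.
rewrite PZ_sub PZ_add ih; last by lia.
by rewrite addrAC subrr add0r.
Qed.

Lemma PZ_Mn z : PZ (MT_M n P z n) = PZ (MT_M n P z 1).
Proof.
rewrite M_n PZ_P; last by lia.
rewrite PZ_sub PZ_add (psi z n.-1); last by lia.
rewrite addrK M_x //; lia.
Qed.

Lemma sum_step lam z :
  \sum_(1 <= i < n) ((1 - lam) *: z i + lam *: MT_T n P z i)
  = \sum_(1 <= i < n) z i + lam *: (MT_M n P z n - MT_M n P z 1).
Proof.
under eq_bigr do rewrite comb_avg.
rewrite big_split /= -scaler_sumr.
congr (_ + _ *: _).
have -> : \sum_(1 <= i < n) (MT_T n P z i - z i)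
    = \sum_(1 <= i < n) (MT_M n P z i.+1 - MT_M n P z i).
  by apply: eq_bigr => i _; rewrite /MT_T (addrC (z i + _)) addKr.
rewrite telescope_sumr //; lia.
Qed.


Lemma main_sec (lam : R) (zs : nat -> nat -> X) :
  0 < lam < 1 ->
  (forall k i, (1 <= i <= n.-1)%N ->
     zs k.+1 i = (1 - lam) *: zs k i + lam *: MT_T n P (zs k) i) ->
  let p := (n.-1)%:R^-1 *: \sum_(1 <= i < n) zs 0%N i in
  (exists zbar : nat -> X,
     (forall i, (1 <= i <= n.-1)%N -> (fun k => zs k i) @ \oo --> zbar i) /\
     (forall i, (1 <= i <= n.-1)%N -> MT_T n P zbar i = zbar i) /\
     (forall i, (1 <= i <= n)%N ->
        (fun k => MT_M n P (zs k) i) @ \oo --> MT_M n P zbar i) /\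
     (forall i, (1 <= i <= n)%N -> MT_M n P zbar i = PZ p)) /\
  (forall k, P 1%N (zs k 1%N) = MT_M n P (zs k) 1%N) /\
  ((fun k => P 1%N (zs k 1%N)) @ \oo --> PZ p) /\
  PZ p = (n.-1)%:R^-1 *: PZ (\sum_(1 <= i < n) zs 0%N i) /\
  (forall x0 : X, (forall i, (1 <= i <= n.-1)%N -> zs 0%N i = x0) ->
     (fun k => P 1%N (zs k 1%N)) @ \oo --> PZ x0).
Proof.
move=> /andP [l0 l1] hrec p.
have rng i : ((i <= n.-1) = (i < n))%N.
  by rewrite -ltnS prednK //; lia.
have c0 : 0 < (1 - lam) / lam by rewrite divr_gt0 // subr_gt0.
have E : forall (f g : nat -> X) j, (f - g) j = f j - g j by [].
have hu : forall k, dotV (zs k.+1 - Sop lam (zs k)) (zs k.+1 - Sop lam (zs k)) = 0.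
  move=> k; rewrite /dotV big_nat big1 // => i hi.
  rewrite E /Sop hi hrec; last by rewrite rng.
  by rewrite subrr (@dot0l R X ip ipL).
have [h [hfix hconv]] := @abstract_main R (nat -> X) dotV dotV_C dotV_L dotV_ge0
  dotV_complete (Sop lam) (Sop_lin lam) _ c0 (Sop_avg lam l0) zs hu.
have hz i : (1 <= i < n)%N -> (fun k => zs k i) @ \oo --> h i.
  move=> hi; apply/cvgrPdist_lt => e e0.
  have [K HK] := hconv _ (exprn_gt0 2 e0).
  exists K => // k /= Kk.
  rewrite -normrN opprB; apply: norm_lt_sq => //.
  have h1 := dotV_coord (zs k - h) i hi; rewrite E in h1.
  exact: le_lt_trans h1 (HK k Kk).
have hT i : (1 <= i < n)%N -> MT_T n P h i = h i.
  move=> hi.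
  have h1 := dotV_coord (h - Sop lam h) i hi; rewrite hfix E /Sop hi comb_fix in h1.
  have h2 : ip (lam *: (h i - MT_T n P h i)) (lam *: (h i - MT_T n P h i)) = 0.
    by apply/eqP; rewrite eq_le h1 (@ip_ge0 R X ip ipN).
  move/(@ip_eq0 R X ip ipN)/eqP: h2; rewrite scaler_eq0 (gt_eqF l0) /= subr_eq0.
  by move/eqP.
have hx i : (i < n)%N -> (fun k => MT_x P (zs k) i) @ \oo --> MT_x P h i.
  elim: i => [|i ih] hi; first exact: cvg_cst.
  have hi' : (1 <= i.+1 <= n)%N by lia.
  case: i ih hi hi' => [|j] ih hi hi'.
    exact: (@proj_cvg R X ip ipC ipL ipN _ _ (hU _ hi') (hP _ hi') _ _ (hz 1%N hi)).
  have hin : (fun k => MT_x P (zs k) j.+1 + zs k j.+2 - zs k j.+1) @ \oo -->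
      (MT_x P h j.+1 + h j.+2 - h j.+1).
    apply: cvgB; last by apply: hz; lia.
    apply: cvgD; last by apply: hz; lia.
    exact: ih (ltnW hi).
  exact: (@proj_cvg R X ip ipC ipL ipN _ _ (hU _ hi') (hP _ hi') _ _ hin).
have hM i : (1 <= i <= n)%N -> (fun k => MT_M n P (zs k) i) @ \oo --> MT_M n P h i.
  move=> hi; have [->|ne] := eqVneq i n.
    have -> : (fun k => MT_M n P (zs k) n)
        = (fun k => P n (MT_x P (zs k) 1 + MT_x P (zs k) n.-1 - zs k n.-1)).
      by apply: funext => k; rewrite M_n.
    rewrite M_n.
    have hin : (fun k => MT_x P (zs k) 1 + MT_x P (zs k) n.-1 - zs k n.-1) @ \oo -->
      (MT_x P h 1 + MT_x P h n.-1 - h n.-1).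
      apply: cvgB; last by apply: hz; lia.
      apply: cvgD; by apply: hx; lia.
    have hn : (1 <= n <= n)%N by lia.
    exact: (@proj_cvg R X ip ipC ipL ipN _ _ (hU _ hn) (hP _ hn) _ _ hin).
  have -> : (fun k => MT_M n P (zs k) i) = (fun k => MT_x P (zs k) i).
    by apply: funext => k; rewrite M_x.
  rewrite M_x //; apply: hx; lia.
set x1 := MT_M n P h 1.
have hMc i : (1 <= i <= n)%N -> MT_M n P h i = x1.
  elim: i => [|i ih] hi; first by lia.
  case: (eqVneq i 0%N) => [->|i0] //.
  have := hT i ltac:(lia); rewrite /MT_T -{2}(addr0 (h i)) => /addrI /eqP.
  rewrite subr_eq0 => /eqP ->; apply: ih; lia.
have Zx1 : [set x | forall i, (1 <= i <= n)%N -> U i x] x1.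
  by move=> j hj; rewrite -(hMc j hj); exact: M_in.
have PZx1 : PZ x1 = x1 by exact: (@proj_fix R X ip ipL ipN _ _ sZ hPZ x1 Zx1).
have PZh i : (1 <= i < n)%N -> PZ (h i) = x1.
  move=> hi; rewrite -psi // -M_x; last by lia.
  by rewrite hMc ?PZx1 //; lia.
have inv k : PZ (\sum_(1 <= i < n) zs k i) = PZ (\sum_(1 <= i < n) zs 0%N i).
  elim: k => [//|k ih]; rewrite -ih.
  have -> : \sum_(1 <= i < n) zs k.+1 i
      = \sum_(1 <= i < n) ((1 - lam) *: zs k i + lam *: MT_T n P (zs k) i).
    by apply: eq_big_nat => i hi; rewrite hrec // rng.
  by rewrite sum_step PZ_add PZ_scale PZ_sub PZ_Mn subrr scaler0 addr0.
have hsum m : (m <= n)%N ->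
    (fun k => \sum_(1 <= i < m) zs k i) @ \oo --> \sum_(1 <= i < m) h i.
  elim: m => [|m ih] hm.
    have -> : (fun k => \sum_(1 <= i < 0) zs k i) = (fun _ => 0).
      by apply: funext => k; rewrite big_geq.
    by rewrite big_geq //; exact: cvg_cst.
  case: (eqVneq m 0%N) => [->|m0].
    have -> : (fun k => \sum_(1 <= i < 1) zs k i) = (fun _ => 0).
      by apply: funext => k; rewrite big_geq.
    by rewrite big_geq //; exact: cvg_cst.
  have -> : (fun k => \sum_(1 <= i < m.+1) zs k i)
      = (fun k => \sum_(1 <= i < m) zs k i) + (fun k => zs k m).
    by apply: funext => k; rewrite big_nat_recr //=; lia.
  rewrite big_nat_recr /=; last by lia.
  apply: cvgD; first by apply: ih; lia.
  by apply: hz; lia.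
have hPZs : (fun k => PZ (\sum_(1 <= i < n) zs k i)) @ \oo --> PZ (\sum_(1 <= i < n) h i).
  exact: (@proj_cvg R X ip ipC ipL ipN _ _ sZ hPZ _ _ (hsum n (leqnn n))).
have eqS : PZ (\sum_(1 <= i < n) h i) = PZ (\sum_(1 <= i < n) zs 0%N i).
  have hc : (fun k => PZ (\sum_(1 <= i < n) zs k i)) @ \oo --> PZ (\sum_(1 <= i < n) zs 0%N i).
    have -> : (fun k => PZ (\sum_(1 <= i < n) zs k i)) = (fun _ => PZ (\sum_(1 <= i < n) zs 0%N i)).
      by apply: funext => k; exact: inv.
    exact: cvg_cst.
  exact: (cvg_unique _ hPZs hc).
have n1 : (n.-1)%:R != 0 :> R by rewrite pnatr_eq0; lia.
have hPZp : PZ p = x1.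
  rewrite /p PZ_scale -eqS (big_morph PZ PZ_add PZ0).
  have -> : \sum_(1 <= i < n) PZ (h i) = \sum_(1 <= i < n) x1.
    by apply: eq_big_nat => i hi; exact: PZh.
  by rewrite sumr_const_nat subn1 -[x1 *+ _]scaler_nat scalerA mulVf // scale1r.
have hMp i : (1 <= i <= n)%N -> MT_M n P h i = PZ p.
  by move=> hi; rewrite hPZp; exact: hMc.
have P1M k : P 1%N (zs k 1%N) = MT_M n P (zs k) 1%N.
  by rewrite M_x //; lia.
have conv1 : (fun k => P 1%N (zs k 1%N)) @ \oo --> PZ p.
  have -> : (fun k => P 1%N (zs k 1%N)) = (fun k => MT_M n P (zs k) 1%N).
    by apply: funext => k; exact: P1M.
  rewrite -(hMp 1%N) //; last by lia.
  by apply: hM; lia.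
split.
  exists h; split; first by move=> i hi; apply: hz; rewrite -rng.
  split; first by move=> i hi; apply: hT; rewrite -rng.
  by split; [exact: hM | exact: hMp].
split; first exact: P1M.
split; first exact: conv1.
split; first by rewrite /p PZ_scale.
move=> x0 hx0.
have -> : x0 = p.
  rewrite /p.
  have -> : \sum_(1 <= i < n) zs 0%N i = \sum_(1 <= i < n) x0.
    by apply: eq_big_nat => i hi; rewrite hx0 // rng.
  by rewrite sumr_const_nat subn1 -[x0 *+ _]scaler_nat scalerA mulVf // scale1r.
exact: conv1.
Qed.

End MT.

Theorem mainTheorem2 (R : realType) (X : completeNormedModType R)
  (ip : X -> X -> R) (n : nat) (U : nat -> set X) (P : nat -> X -> X)
  (PZ : X -> X) (lam : R) (zs : nat -> nat -> X) :
  is_inner_product ip ->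
  (3 <= n)%N ->
  (forall i, (1 <= i <= n)%N -> closed_subspace (U i)) ->
  (forall i, (1 <= i <= n)%N -> is_orth_proj ip (U i) (P i)) ->
  is_orth_proj ip [set x | forall i, (1 <= i <= n)%N -> U i x] PZ ->
  0 < lam < 1 ->
  (forall k i, (1 <= i <= n.-1)%N ->
     zs k.+1 i = (1 - lam) *: zs k i + lam *: MT_T n P (zs k) i) ->
  let p := (n.-1)%:R^-1 *: \sum_(1 <= i < n) zs 0%N i in
  (exists zbar : nat -> X,
     (forall i, (1 <= i <= n.-1)%N -> (fun k => zs k i) @ \oo --> zbar i) /\
     (forall i, (1 <= i <= n.-1)%N -> MT_T n P zbar i = zbar i) /\
     (forall i, (1 <= i <= n)%N ->
        (fun k => MT_M n P (zs k) i) @ \oo --> MT_M n P zbar i) /\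
     (forall i, (1 <= i <= n)%N -> MT_M n P zbar i = PZ p)) /\
  (forall k, P 1%N (zs k 1%N) = MT_M n P (zs k) 1%N) /\
  ((fun k => P 1%N (zs k 1%N)) @ \oo --> PZ p) /\
  PZ p = (n.-1)%:R^-1 *: PZ (\sum_(1 <= i < n) zs 0%N i) /\
  (forall x0 : X, (forall i, (1 <= i <= n.-1)%N -> zs 0%N i = x0) ->
     (fun k => P 1%N (zs k 1%N)) @ \oo --> PZ x0).
Proof.
move=> [ipC [ipL ipN]] n3 hU hP hPZ hlam hrec.
have sU : forall i, (1 <= i <= n)%N -> subsp (U i).
  by move=> i hi; have [_ [_ h]] := hU i hi; exact: h.
exact: (@main_sec R X ip ipC ipL ipN n U P n3 sU hP PZ hPZ lam zs hlam hrec).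
Qed.
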